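(* Let $\beta>0$, $\gamma>0$, $\alpha_I\in(0,1]$, $d\ge0$, and let $q$ be a probability measure on $(0,\infty)$ (absolutely continuous part plus finitely many atoms, finite mean $T_q$). Fix $r^\star>0$, let $\mathcal C_1=(0,r^\star]$, $\mathcal C_2=(r^\star,\infty)$, $p^i=q(\mathcal C_i)>0$, $q^i(I)=q(I\cap\mathcal C_i)/p^i$ with mean $T_{q^i}$. For $d>0$ set $$\mu^{\rm in}=\frac{d}{1-\hat q(d)},\quad \mu^{{\rm in},i}=\frac{d}{1-\hat q^i(d)},\quad \pi^i=p^i\frac{1-\hat q^i(d)}{1-\hat q(d)}\quad(i=1,2),$$ with $\hat\nu(d)=\int e^{-dr}\nu(dr)$, and for $d=0$ set $\mu^{\rm in}=1/T_q$, $\mu^{{\rm in},i}=1/T_{q^i}$, $\pi^i=p^iT_{q^i}/T_q$. Assume $\mu^{{\rm in},i}>0$, $i=1,2$. Let $x^\star$ be the nonnegative equilibrium of the single-class SIS equation $$\dot x=\alpha_I\mu^{\rm in}+\beta x(1-x)-(\gamma+\mu^{\rm in})x,$$ i.e. $x^\star=\frac1{2\beta}\Big[(\beta-\gamma-\mu^{\rm in})+\sqrt{(\beta-\gamma-\mu^{\rm in})^2+4\alpha_I\mu^{\rm in}\beta}\Big]$, and let $(x_1^\star,x_2^\star)$ with $x_1^\star,x_2^\star\ge0$ be an equilibrium of the two-class SIS system $$\dot x^i=\alpha_I\pi^i\mu^{{\rm in},i}+\beta(x^1+x^2)(\pi^i-x^i)-(\gamma+\mu^{{\rm in},i})x^i,\qquad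 i=1,2,$$ and $\omega^\star=x_1^\star+x_2^\star$. Then $x^\star>0$ and $\omega^\star>0$. Moreover, $x^\star<\omega^\star$ (respectively $x^\star>\omega^\star$, $x^\star=\omega^\star$) if and only if $\alpha_I<1-\frac{\gamma}{\beta}$ (respectively $\alpha_I>1-\frac\gamma\beta$, $\alpha_I=1-\frac\gamma\beta$).
   Context: Interpretation: $x$ is the proportion of infective inmates in the prison at population equilibrium when sentence-length structure is ignored; $x^i$ is the proportion (relative to the total prison population) of infective inmates with initial sentence length in class $\mathcal C_i$ (short/long sentences); $\alpha_I$ is the infective proportion among new inmates, $\beta$ the contact rate, $\gamma$ the recovery rate, $d$ the removal rate common to both classes. The case $d=0$ is defined by the stated limiting values. *)

(* Defs.v *)
From HB Require Import structures.
From mathcomp Require Import all_boot all_order all_algebra.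
From mathcomp Require Import all_classical all_reals all_analysis.
Set Implicit Arguments. Unset Strict Implicit. Unset Printing Implicit Defensive.
Import Order.TTheory GRing.Theory Num.Theory.
Import numFieldNormedType.Exports.
Local Open Scope classical_set_scope.
Local Open Scope ring_scope.

Section Defs.
Variable R : realType.
Variable q : probability R R.

Definition supported_on_pos : Prop := q [set x : R | x <= 0] = 0%E.

Definition ac_plus_finite_atoms : Prop :=
  exists (f : R -> R) (s : seq (R * R)),
    (forall x, 0 <= f x) /\ measurable_fun setT f /\
    forall A : set R, measurable A ->
      q A = (\int[lebesgue_measure]_(x in A) (f x)%:E +
             (\sum_(a <- s) a.2 * \1_A a.1)%:E)%E.

Definition finite_mean : Prop := q.-integrable setT (fun r => r%:E).

Definition cls (rs : R) (i : bool) : set R :=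
  if i then `]0, rs]%classic else `]rs, +oo[%classic.

Definition pcl (rs : R) (i : bool) : R := fine (q (cls rs i)).

Definition qhat (d : R) : R := Rintegral q setT (fun r => expR (- (d * r))).
Definition qhat_cl (rs : R) (i : bool) (d : R) : R :=
  Rintegral q (cls rs i) (fun r => expR (- (d * r))) / pcl rs i.

Definition Tq : R := Rintegral q setT (fun r => r).
Definition Tq_cl (rs : R) (i : bool) : R :=
  Rintegral q (cls rs i) (fun r => r) / pcl rs i.

Definition mu_in (d : R) : R :=
  if d == 0 then 1 / Tq else d / (1 - qhat d).
Definition mu_in_cl (rs : R) (i : bool) (d : R) : R :=
  if d == 0 then 1 / Tq_cl rs i else d / (1 - qhat_cl rs i d).
Definition pi_cl (rs : R) (i : bool) (d : R) : R :=
  if d == 0 then pcl rs i * Tq_cl rs i / Tq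
  else pcl rs i * (1 - qhat_cl rs i d) / (1 - qhat d).

End Defs.

Definition xstar (R : realType) (alphaI beta gamma mu : R) : R :=
  1 / (2 * beta) * ((beta - gamma - mu) +
    Num.sqrt ((beta - gamma - mu) ^+ 2 + 4 * alphaI * mu * beta)).

(* Main.v *)
Require Import Defs.
From HB Require Import structures.
From mathcomp Require Import all_boot all_order all_algebra.
From mathcomp Require Import all_classical all_reals all_analysis.
From mathcomp Require Import measurable_realfun.
From mathcomp Require Import lra ring.
Import Order.TTheory GRing.Theory Num.Theory.
Import numFieldNormedType.Exports.
Local Open Scope classical_set_scope.
Local Open Scope ring_scope.

Lemma sgn_lem (R : realType) (K S q w d X : R) :
  0 < S -> q < 0 -> 0 < w -> d = K * S -> w * X = K * q ->
  (0 < K -> 0 < d /\ X < 0) /\ (K < 0 -> d < 0 /\ 0 < X) /\ (K = 0 -> d = 0 /\ X = 0).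
Proof.
move=> S0 q0 w0 dE XE; split; [|split].
- move=> K0; split; first by rewrite dE mulr_gt0.
  have : w * X < 0 by rewrite XE pmulr_rlt0.
  by rewrite pmulr_rlt0.
- move=> K0; split; first by rewrite dE nmulr_rlt0.
  have : 0 < w * X by rewrite XE nmulr_rgt0.
  by rewrite pmulr_rgt0.
- move=> K0; split; first by rewrite dE K0 mul0r.
  by move: XE; rewrite K0 mul0r => /eqP; rewrite mulf_eq0 gt_eqF //= => /eqP.
Qed.

Lemma sgn2 (R : realType) (y P K J : R) : 0 < P -> 0 < J -> y * P = K * J ->
  (0 < K -> 0 < y) /\ (K < 0 -> y < 0) /\ (K = 0 -> y = 0).
Proof.
move=> P0 J0 e; split; [|split] => K0.
- by rewrite -(pmulr_lgt0 _ P0) e mulr_gt0.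
- by rewrite -(pmulr_llt0 _ P0) e pmulr_llt0.
- by move: e; rewrite K0 mul0r => /eqP; rewrite mulf_eq0 (gt_eqF P0) orbF => /eqP.
Qed.

Lemma fin3 (R : realType) (xs w c : R) (P : Prop) :
  (0 < c -> xs < w) -> (c < 0 -> w < xs) -> (c = 0 -> w = xs) -> (P <-> c = 0) ->
  (xs < w <-> 0 < c) /\ (w < xs <-> c < 0) /\ (xs = w <-> P).
Proof.
move=> h1 h2 h3 hP.
have [c0|c0|c0] := ltrgt0P c.
- have := h1 c0 => h; split; [split => hh; lra | split; [split => hh; lra | split => hh; [apply/hP; lra | have := hP.1 hh; lra]]].
- have := h2 c0 => h; split; [split => hh; lra | split; [split => hh; lra | split => hh; [apply/hP; lra | have := hP.1 hh; lra]]].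
- have := h3 c0 => h; split; [split => hh; lra | split; [split => hh; lra | split => hh; [apply/hP; lra | have := hP.1 hh; lra]]].
Qed.

Lemma core (R : realType) (al be ga m1 m2 p1 p2 x1 x2 : R) :
  0 < be -> 0 < ga -> 0 < al -> al <= 1 -> 0 < m1 -> 0 < m2 ->
  0 < p1 -> 0 < p2 -> p1 + p2 = 1 -> m1 != m2 -> 0 <= x1 -> 0 <= x2 ->
  al * p1 * m1 + be * (x1 + x2) * (p1 - x1) - (ga + m1) * x1 = 0 ->
  al * p2 * m2 + be * (x1 + x2) * (p2 - x2) - (ga + m2) * x2 = 0 ->
  let xs := xstar al be ga (p1 * m1 + p2 * m2) in
  let om := x1 + x2 in
  0 < xs /\ 0 < om /\
  (xs < om <-> al < 1 - ga / be) /\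
  (xs > om <-> al > 1 - ga / be) /\
  (xs = om <-> al = 1 - ga / be).
Proof.
move=> be0 ga0 al0 al1 m10 m20 p10 p20 p12 m12 x10 x20 e1 e2 xs om.
set mu := p1 * m1 + p2 * m2.
have mu0 : 0 < mu by rewrite /mu; nra.
set b := be - ga - mu.
set D := b ^+ 2 + 4 * al * mu * be.
have amb : 0 < al * mu * be by rewrite !mulr_gt0.
have D0 : 0 < D.
  rewrite /D -mulrA -mulrA; apply: ltr_wpDl; first exact: sqr_ge0.
  by rewrite mulr_gt0 // mulrA.
set sq := Num.sqrt D.
have sq2 : sq ^+ 2 = D by rewrite /sq sqr_sqrtr // ltW.
have sq0 : 0 <= sq by rewrite /sq sqrtr_ge0.
have sqD : sq ^+ 2 - b ^+ 2 = 4 * (al * mu * be) by rewrite sq2 /D; ring.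
have sqb : b < sq /\ - b < sq by split; nra.
set t := 1 / (2 * be).
have t2 : t * (2 * be) = 1 by rewrite /t mul1r mulVf // mulf_neq0 // gt_eqF.
have t0 : 0 < t by rewrite /t divr_gt0 // mulr_gt0.
have xsE : xs = t * (b + sq) by [].
set xm := t * (b - sq).
have xs0 : 0 < xs by rewrite xsE; nra.
have xm0 : xm < 0 by rewrite /xm; nra.
have hE : forall x, al * mu + be * x * (1 - x) - (ga + mu) * x
                    = - be * (x - xs) * (x - xm).
  move=> x.
  have f1 : be * (xs + xm) = b by rewrite xsE /xm; nra.
  have f2 : be * xs * xm = - (al * mu).
    rewrite xsE /xm.
    have -> : be * (t * (b + sq)) * (t * (b - sq)) = be * t ^+ 2 * (b ^+ 2 - sq ^+ 2) by ring.
    rewrite sq2 /D.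
    have -> : be * t ^+ 2 * (b ^+ 2 - (b ^+ 2 + 4 * al * mu * be)) = - (al * mu) * (t * (2 * be)) ^+ 2 by ring.
    by rewrite t2 expr1n mulr1.
  transitivity (- be * x ^+ 2 + be * (xs + xm) * x - be * xs * xm); last by ring.
  rewrite f1 f2 /b; ring.
set w := x1 + x2.
have w0 : 0 < w.
  rewrite lt_neqAle addr_ge0 // andbT; apply/eqP => w0.
  have [x1z x2z] : x1 = 0 /\ x2 = 0 by rewrite /w in w0; split; lra.
  have : 0 < al * p1 * m1 by rewrite !mulr_gt0.
  move: e1; rewrite -/w -w0 x1z; lra.
set a := be * w + ga.
have a0 : 0 < a by rewrite /a; nra.
set K := be * w * (1 - al) - al * ga.
have u1 : a + m1 != 0 by rewrite gt_eqF //; lra.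
have u2 : a + m2 != 0 by rewrite gt_eqF //; lra.
have x1E : x1 = p1 * (al + K / (a + m1)).
  have h : x1 * (a + m1) = p1 * (al * m1 + be * w).
    apply/eqP; rewrite -subr_eq0; apply/eqP; rewrite -[RHS]oppr0 -e1 /a /w; ring.
  apply: (mulIf u1); rewrite h /K /a; field; exact: u1.
have x2E : x2 = p2 * (al + K / (a + m2)).
  have h : x2 * (a + m2) = p2 * (al * m2 + be * w).
    apply/eqP; rewrite -subr_eq0; apply/eqP; rewrite -[RHS]oppr0 -e2 /a /w; ring.
  apply: (mulIf u2); rewrite h /K /a; field; exact: u2.
set S := p1 / (a + m1) + p2 / (a + m2).
have wE : w - al = K * S.
  have : x1 + x2 - al * (p1 + p2) = K * S by rewrite {1}x1E {1}x2E /S; ring.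
  by rewrite p12 mulr1.
have v1 : 0 < 1 / (a + m1) by rewrite divr_gt0 //; lra.
have v2 : 0 < 1 / (a + m2) by rewrite divr_gt0 //; lra.
have S0 : 0 < S by rewrite /S -[p1]mulr1 -[p2]mulr1 -!mulrA !mul1r; nra.
have Sa : S * a < 1.
  have -> : S * a = 1 - (p1 * m1 / (a + m1) + p2 * m2 / (a + m2)).
    rewrite /S -p12; field; by rewrite u1 u2.
  have : 0 < p1 * m1 / (a + m1) by rewrite !divr_gt0 ?mulr_gt0 //; lra.
  have : 0 < p2 * m2 / (a + m2) by rewrite !divr_gt0 ?mulr_gt0 //; lra.
  lra.
set J := (a + mu) * S - 1.
have J0 : 0 < J.
  have -> : J = p1 * p2 * (m1 - m2) ^+ 2 / ((a + m1) * (a + m2)).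
    rewrite /J /S /mu.
    have -> : p2 = 1 - p1 by lra.
    field; by rewrite u1 u2.
  have sq12 : 0 < (m1 - m2) ^+ 2 by rewrite exprn_even_gt0 //= subr_eq0 m12.
  apply: divr_gt0; first by apply: mulr_gt0 => //; apply: mulr_gt0.
  apply: mulr_gt0; lra.
have hw : al * mu + be * w * (1 - w) - (ga + mu) * w = - (K * J).
  have -> : al * mu + be * w * (1 - w) - (ga + mu) * w = (a + mu) * (al - w) + K by rewrite /a /K; ring.
  have -> : al - w = - (K * S) by rewrite -wE; ring.
  rewrite /J; ring.
rewrite hE in hw.
have Sa' : S * a - 1 < 0 by lra.
have key1 : w * (be * w + ga - be) = K * (S * a - 1).
  have -> : w * (be * w + ga - be) = (w - al) * a - K by rewrite /a /K; ring.
  rewrite wE; ring.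
have KK : K = be * (1 - al) * (w - al) + al * (be * (1 - al) - ga) by rewrite /K; ring.
have wxm : 0 < w - xm by lra.
(* sign of w - xs equals sign of K *)
have hK : be * (w - xs) * (w - xm) = K * J by lra.
set c := be * (1 - al) - ga.
have cE : (al < 1 - ga / be) = (0 < c).
  rewrite /c -subr_gt0 -(pmulr_rgt0 _ be0).
  congr (0 < _); rewrite mulrBr mulrBr mulr1 mulrCA divff ?mulr1 ?gt_eqF //; ring.
have cE2 : (al > 1 - ga / be) = (c < 0).
  rewrite /c -subr_lt0 -(pmulr_rlt0 _ be0).
  congr (_ < 0); rewrite mulrBr mulrBr mulr1 mulrCA divff ?mulr1 ?gt_eqF //; ring.
have cE3 : (al = 1 - ga / be) <-> (c = 0).
  have : (al == 1 - ga / be) = (c == 0).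
    rewrite eq_sym -subr_eq0 -(mulrI_eq0 _ (lregP (negbT (gt_eqF be0)))) /c.
    congr (_ == 0); rewrite mulrBr mulrBr mulr1 mulrCA divff ?mulr1 ?gt_eqF //; ring.
  move=> h; split => e; apply/eqP; [rewrite -h | rewrite h]; exact/eqP.
have hd := @sgn_lem R K S (S*a-1) w (w-al) (be*w+ga-be) S0 Sa' w0 wE key1.
have bw : 0 < be * (w - xm) by rewrite mulr_gt0.
have hK' : (w - xs) * (be * (w - xm)) = K * J by rewrite -hK; ring.
have hs := @sgn2 R (w-xs) (be*(w-xm)) K J bw J0 hK'.
have pp : forall y, 0 < y -> 0 < be * y by move=> y y0; rewrite mulr_gt0.
have Kpos : 0 < c -> 0 < K.
  move=> c0; have [K0|K0|K0] := ltrgt0P K => //.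
  - have [h1 h2] := hd.2.1 K0; have h3 : 0 < al - w by lra.
    have := pp _ h3; rewrite /c in c0; lra.
  - have [h1 h2] := hd.2.2 K0; have : be * (w - al) = 0 by rewrite h1 mulr0.
     rewrite /c in c0; lra.
have Kneg : c < 0 -> K < 0.
  move=> c0; have [K0|K0|K0] := ltrgt0P K => //.
  - have [h1 h2] := hd.1 K0; have := pp _ h1; rewrite /c in c0; lra.
  - have [h1 h2] := hd.2.2 K0; have : be * (w - al) = 0 by rewrite h1 mulr0.
     rewrite /c in c0; lra.
have Kz : c = 0 -> K = 0.
  move=> c0; have [K0|K0|K0] := ltrgt0P K => //.
  - have [h1 h2] := hd.1 K0; have := pp _ h1; rewrite /c in c0; lra.
  - have [h1 h2] := hd.2.1 K0; have h3 : 0 < al - w by lra.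
    have := pp _ h3; rewrite /c in c0; lra.
have s1 : 0 < K -> xs < w by move=> K0; have := hs.1 K0; lra.
have s2 : K < 0 -> w < xs by move=> K0; have := hs.2.1 K0; lra.
have s3 : K = 0 -> w = xs by move=> K0; have := hs.2.2 K0; lra.
split => //; split => //.
rewrite /om -/w cE cE2.
apply: (@fin3 R xs w c) => //.
- by move=> c0; apply: s1; apply: Kpos.
- by move=> c0; apply: s2; apply: Kneg.
- by move=> c0; apply: s3; apply: Kz.
Qed.

Section M.
Variable R : realType.
Variable q : probability R R.

Lemma clsE (rs : R) i (x : R) : cls rs i x <-> if i then 0 < x /\ x <= rs else rs < x.
Proof.
case: i; rewrite /cls /= in_itv /=; last by rewrite ?andbT.
by split => [/andP|[-> ->]].
Qed.

Lemma cls_meas (rs : R) i : measurable (cls rs i).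
Proof. case: i; exact: measurable_itv. Qed.


Lemma qC (rs : R) i : q (cls rs i) = (pcl q rs i)%:E.
Proof. by rewrite /pcl fineK //; apply: fin_num_measure; exact: cls_meas. Qed.

Definition N0 : set R := [set x | x <= 0].

Lemma N0_meas : measurable N0.
Proof.
have -> : N0 = `]-oo, 0]%classic.
  by apply/seteqP; split => x /=; rewrite /N0 /= in_itv /=.
exact: measurable_itv.
Qed.

Lemma decT (rs : R) : 0 < rs -> [set: R] = N0 `|` (cls rs true `|` cls rs false).
Proof.
move=> rs0; apply/seteqP; split => x // _.
have [x0|x0] := leP x 0; first by left.
right; have [xr|xr] := leP x rs; [left|right]; by apply/clsE.
Qed.

Lemma disj1 (rs : R) : [disjoint cls rs true & cls rs false].
Proof.
rewrite disj_set2E; apply/eqP/seteqP; split => x // [h1 h2].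
move/clsE: h1 => [_ h1]; move/clsE: h2 => h2.
by move: (le_lt_trans h1 h2); rewrite ltxx.
Qed.

Lemma disj2 (rs : R) : 0 < rs -> [disjoint N0 & cls rs true `|` cls rs false].
Proof.
move=> rs0; rewrite disj_set2E; apply/eqP/seteqP; split => x // [h1 h2].
rewrite /N0 /= in h1.
case: h2 => [/clsE [h2 _]|/clsE h2].
- by move: (le_lt_trans h1 h2); rewrite ltxx.
- by move: (le_lt_trans h1 (lt_trans rs0 h2)); rewrite ltxx.
Qed.

Lemma pcl_sum (rs : R) : 0 < rs -> supported_on_pos q ->
  pcl q rs true + pcl q rs false = 1.
Proof.
move=> rs0 sup.
have := probability_setT q; rewrite (decT _ rs0).
rewrite measureU; [|exact: N0_meas|exact: measurableU (cls_meas _ _) (cls_meas _ _)|].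
  rewrite measureU; [|exact: cls_meas|exact: cls_meas|by move: (disj1 rs); rewrite disj_set2E => /eqP].
  have e (a b c : \bar R) : a = 0%E -> (a + (b + c) = 1 -> b + c = 1)%E.
    by move=> ->; rewrite add0e.
  move=> h; have {h} := e _ _ _ sup h.
  have e2 (a b : \bar R) (x y : R) : a = x%:E -> b = y%:E -> (a + b = 1)%E -> x + y = 1.
    by move=> -> ->; rewrite -EFinD; case.
  by move=> h; apply: e2 (qC _ _) (qC _ _) h.
by move: (disj2 _ rs0); rewrite disj_set2E => /eqP.
Qed.


Lemma Rint_gt0 (A : set R) (g : R -> R) : measurable A ->
  q.-integrable A (EFin \o g) -> (forall x, A x -> 0 < g x) -> (0 < q A)%E ->
  0 < Rintegral q A g.
Proof.
move=> mA ig g0 qA.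
have mg := measurable_int q ig.
rewrite lt_neqAle Rintegral_ge0 ?andbT; last by move=> x /g0 /ltW.
apply/negP => /eqP h.
have I0 : (\int[q]_(x in A) `|(EFin \o g) x| = 0)%E.
  transitivity (\int[q]_(x in A) (EFin \o g) x)%E.
    apply: eq_integral => x /set_mem Ax /=.
    by rewrite ger0_norm // ltW // g0.
  have hf : fine (\int[q]_(x in A) (EFin \o g) x)%E = 0 by rewrite h.
  by move: (integrable_fin_num mA ig) => /fineK <-; rewrite hf.
have := (ae_eq_integral_abs q mA mg).1 I0.
case => N [mN qN sub].
have AN : A `<=` N.
  move=> x Ax; apply: sub => /= /(_ Ax).
  by case=> /eqP; rewrite gt_eqF // g0.
have := subset_measure0 mA mN AN qN.
by move=> h0; move: qA; rewrite h0 ltxx.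
Qed.

Lemma split_int (rs : R) (f : R -> R) : 0 < rs -> supported_on_pos q ->
  q.-integrable setT (EFin \o f) ->
  Rintegral q setT f = Rintegral q (cls rs true) f + Rintegral q (cls rs false) f.
Proof.
move=> rs0 sup ifT.
have mU : measurable (cls rs true `|` cls rs false) by apply: measurableU; exact: cls_meas.
have iU : q.-integrable (cls rs true `|` cls rs false) (EFin \o f).
  by apply: integrableS ifT => //; rewrite (decT _ rs0); exact: subsetUr.
rewrite (decT _ rs0) Rintegral_setU; first last.
- exact: disj2.
- by rewrite -decT.
- exact: mU.
- exact: N0_meas.
rewrite Rintegral_setU; first last.
- exact: disj1.
- exact: iU.
- exact: cls_meas.
- exact: cls_meas.
rewrite {1}/Rintegral null_set_integral ?add0r //.
- exact: N0_meas.
- by apply: measurable_funS (measurable_int q ifT) => //; exact: N0_meas.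
Qed.

Lemma int_bdd (A : set R) (f : R -> R) : measurable A -> (forall x, A x -> 0 < x) ->
  measurable_fun setT f -> (forall x, 0 <= f x) -> (forall x, 0 < x -> f x <= 1) ->
  q.-integrable A (EFin \o f).
Proof.
move=> mA Apos mf f0 f1; apply/integrableP; split.
  by apply/measurable_EFinP; exact: measurable_funS mf.
have H : (\int[q]_(x in A) `|(EFin \o f) x| <= \int[q]_(x in A) (cst 1%E x))%E.
  apply: ge0_le_integral => //.
  - by apply/measurableT_comp => //; apply/measurable_EFinP; exact: measurable_funS mf.
  - by move=> x Ax /=; rewrite ger0_norm ?lee_fin // f1 // Apos.
apply: le_lt_trans H _.
rewrite integral_cst // mul1e.
by apply: (le_lt_trans (probability_le1 q mA)); rewrite ltry.
Qed.

Lemma split_ge0 (rs : R) (f : R -> R) : 0 < rs -> supported_on_pos q ->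
  measurable_fun setT f -> (forall x, 0 <= f x) -> (forall x, 0 < x -> f x <= 1) ->
  Rintegral q setT f = Rintegral q (cls rs true) f + Rintegral q (cls rs false) f.
Proof.
move=> rs0 sup mf f0 f1; apply: split_int => //.
have mD : measurable (setT `\` N0) by apply: measurableD => //; exact: N0_meas.
apply/(negligible_integrable _ _ _ _).2 => //.
- exact: N0_meas.
- by apply/measurable_EFinP.
- exact: sup.
- apply: int_bdd => //.
  by move=> x [_]; rewrite /N0 /= => /negP; rewrite -ltNge.
Qed.


Lemma intB (A : set R) (f g : R -> R) : measurable A ->
  q.-integrable A (EFin \o f) -> q.-integrable A (EFin \o g) ->
  q.-integrable A (EFin \o (fun x => f x - g x)).
Proof.
move=> mA fi gi; apply: eq_integrable (integrableB mA fi gi) => // x _ /=.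
Qed.

Lemma intC (A : set R) (k : R) : measurable A -> q.-integrable A (EFin \o (fun _ => k)).
Proof. by move=> mA; apply: finite_measure_integrable_cst. Qed.

Lemma Rint_cst_cls (rs k : R) i : Rintegral q (cls rs i) (fun _ => k) = k * pcl q rs i.
Proof. by rewrite Rintegral_cst //; exact: cls_meas. Qed.

Lemma Rint_lt (rs k : R) i (f : R -> R) : q.-integrable (cls rs i) (EFin \o f) ->
  (forall x, cls rs i x -> f x < k) -> 0 < pcl q rs i ->
  Rintegral q (cls rs i) f < k * pcl q rs i.
Proof.
move=> fi fk p0.
have m := cls_meas rs i.
have := @Rint_gt0 (cls rs i) (fun x => k - f x) m (@intB _ _ _ m (@intC _ k m) fi).
rewrite RintegralB //; last exact: intC.
rewrite Rint_cst_cls subr_gt0; apply => //.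
- by move=> x /fk; rewrite subr_gt0.
- by rewrite qC lte_fin.
Qed.

Lemma Rint_le (rs k : R) i (f : R -> R) : q.-integrable (cls rs i) (EFin \o f) ->
  (forall x, cls rs i x -> k <= f x) ->
  k * pcl q rs i <= Rintegral q (cls rs i) f.
Proof.
move=> fi fk; have m := cls_meas rs i.
rewrite -Rint_cst_cls; apply: le_Rintegral => //; exact: intC.
Qed.


Lemma facts0 (rs : R) : 0 < rs -> supported_on_pos q -> finite_mean q ->
  0 < pcl q rs true -> 0 < pcl q rs false ->
  0 < mu_in_cl q rs true 0 -> 0 < mu_in_cl q rs false 0 ->
  pi_cl q rs true 0 + pi_cl q rs false 0 = 1 /\
  mu_in q 0 = pi_cl q rs true 0 * mu_in_cl q rs true 0
              + pi_cl q rs false 0 * mu_in_cl q rs false 0 /\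
  mu_in_cl q rs true 0 != mu_in_cl q rs false 0 /\
  0 < pi_cl q rs true 0 /\ 0 < pi_cl q rs false 0.
Proof.
move=> rs0 sup fm p10 p20.
rewrite /mu_in_cl /pi_cl /mu_in /Tq_cl eqxx.
have sp := @pcl_sum rs rs0 sup.
have i1 : q.-integrable (cls rs true) (EFin \o (fun r : R => r)).
  by apply: integrableS fm => //; exact: cls_meas.
have i2 : q.-integrable (cls rs false) (EFin \o (fun r : R => r)).
  by apply: integrableS fm => //; exact: cls_meas.
have TqE : Tq q = Rintegral q (cls rs true) (fun r => r) + Rintegral q (cls rs false) (fun r => r).
  exact: (@split_int rs (fun r => r) rs0 sup fm).
have M1le : Rintegral q (cls rs true) (fun r => r) <= rs * pcl q rs true.
  rewrite -Rint_cst_cls; apply: le_Rintegral => //; first exact: cls_meas.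
  - exact: intC (cls_meas _ _).
  - by move=> x /clsE [].
have M2gt : rs * pcl q rs false < Rintegral q (cls rs false) (fun r => r).
  have m2 := cls_meas rs false.
  have := @Rint_gt0 (cls rs false) (fun x => x - rs) m2 (@intB _ _ _ m2 i2 (@intC _ rs m2)).
  rewrite RintegralB //; last exact: intC.
  rewrite Rint_cst_cls subr_gt0; apply.
  - by move=> x /clsE; rewrite subr_gt0.
  - by rewrite qC lte_fin.
set M1 := Rintegral q (cls rs true) (fun r => r) in TqE M1le *.
set M2 := Rintegral q (cls rs false) (fun r => r) in TqE M2gt *.
set p1 := pcl q rs true in p10 M1le sp *.
set p2 := pcl q rs false in p20 M2gt sp *.
rewrite TqE.
rewrite !div1r !invr_gt0 => T10 T20.
have M10 : 0 < M1 by move: T10; rewrite pmulr_lgt0 // invr_gt0.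
have M20 : 0 < M2 by move: T20; rewrite pmulr_lgt0 // invr_gt0.
have p1n : p1 != 0 by rewrite gt_eqF.
have p2n : p2 != 0 by rewrite gt_eqF.
have M1n : M1 != 0 by rewrite gt_eqF.
have M2n : M2 != 0 by rewrite gt_eqF.
have Mn : M1 + M2 != 0 by rewrite gt_eqF // addr_gt0.
split; first by field; rewrite ?Mn ?p1n ?p2n ?M1n ?M2n.
split; first by rewrite -[(M1 + M2)^-1]mul1r -{1}sp; field; rewrite ?Mn ?p1n ?p2n ?M1n ?M2n.
split.
  apply/negP => /eqP /invr_inj h.
  have : M1 / p1 <= rs by rewrite ler_pdivrMr // mulrC.
  have : rs < M2 / p2 by rewrite ltr_pdivlMr // mulrC.
  lra.
by split; rewrite !mulr_gt0 // ?invr_gt0 ?addr_gt0.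
Qed.


Lemma me (d : R) : measurable_fun setT (fun r : R => expR (- (d * r))).
Proof.
apply: measurableT_comp; first exact: measurable_expR.
have -> : (fun r : R => - (d * r)) = (fun r => (- d) * r) by apply: funext => r; rewrite mulNr.
exact: mulrl_measurable.
Qed.


Lemma factsd (rs d : R) : 0 < rs -> 0 < d -> supported_on_pos q ->
  0 < pcl q rs true -> 0 < pcl q rs false ->
  0 < mu_in_cl q rs true d -> 0 < mu_in_cl q rs false d ->
  pi_cl q rs true d + pi_cl q rs false d = 1 /\
  mu_in q d = pi_cl q rs true d * mu_in_cl q rs true d
              + pi_cl q rs false d * mu_in_cl q rs false d /\
  mu_in_cl q rs true d != mu_in_cl q rs false d /\
  0 < pi_cl q rs true d /\ 0 < pi_cl q rs false d.
Proof.
move=> rs0 d0 sup p10 p20.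
rewrite /mu_in_cl /pi_cl /mu_in /qhat_cl /qhat (gt_eqF d0).
have sp := @pcl_sum rs rs0 sup.
have ge0 : forall x : R, 0 <= expR (- (d * x)) by move=> x; exact: expR_ge0.
have le1 : forall x : R, 0 < x -> expR (- (d * x)) <= 1.
  by move=> x x0; rewrite expR_le1 oppr_le0 mulr_ge0 // ltW.
have pos1 : forall x, cls rs true x -> 0 < x by move=> x /clsE [].
have pos2 : forall x, cls rs false x -> 0 < x by move=> x /clsE h; exact: lt_trans rs0 h.
have i1 := @int_bdd _ (fun r => expR (- (d * r))) (cls_meas rs true) pos1 (me d) ge0 le1.
have i2 := @int_bdd _ (fun r => expR (- (d * r))) (cls_meas rs false) pos2 (me d) ge0 le1.
have qE := @split_ge0 rs (fun r => expR (- (d * r))) rs0 sup (me d) ge0 le1.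
set c := expR (- (d * rs)).
have E1ge : c * pcl q rs true <= Rintegral q (cls rs true) (fun r => expR (- (d * r))).
  apply: Rint_le => // x /clsE [_ xr].
  by rewrite /c ler_expR lerN2 ler_wpM2l // ltW.
have E2lt : Rintegral q (cls rs false) (fun r => expR (- (d * r))) < c * pcl q rs false.
  apply: Rint_lt => // x /clsE xr.
  by rewrite /c ltr_expR ltrN2 ltr_pM2l.
rewrite qE.
set E1 := Rintegral q (cls rs true) _ in E1ge *.
set E2 := Rintegral q (cls rs false) _ in E2lt *.
set p1 := pcl q rs true in p10 E1ge sp *.
set p2 := pcl q rs false in p20 E2lt sp *.
have p1n : p1 != 0 by rewrite gt_eqF.
have p2n : p2 != 0 by rewrite gt_eqF.
have dn : d != 0 by rewrite gt_eqF.
move=> h1 h2.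
have y10 : 0 < 1 - E1 / p1 by move: h1; rewrite pmulr_rgt0 // invr_gt0.
have y20 : 0 < 1 - E2 / p2 by move: h2; rewrite pmulr_rgt0 // invr_gt0.
set y1 := 1 - E1 / p1 in y10 *.
set y2 := 1 - E2 / p2 in y20 *.
have y1n : y1 != 0 by rewrite gt_eqF.
have y2n : y2 != 0 by rewrite gt_eqF.
have QE : 1 - (E1 + E2) = p1 * y1 + p2 * y2.
  by rewrite /y1 /y2 -{1}sp; field; rewrite ?p1n ?p2n.
have Q0 : 0 < 1 - (E1 + E2) by rewrite QE addr_gt0 // mulr_gt0.
have Qn : 1 - (E1 + E2) != 0 by rewrite gt_eqF.
split; first by rewrite QE; field; rewrite -QE Qn.
split.
  by rewrite -[d / (1 - (E1 + E2))]mul1r -{1}sp; field; rewrite ?Qn ?y1n ?y2n.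
split.
  apply/negP => /eqP /(mulfI dn) /invr_inj h.
  have : c <= E1 / p1 by rewrite ler_pdivlMr // mulrC.
  have : E2 / p2 < c by rewrite ltr_pdivrMr // mulrC.
  rewrite /y1 /y2 in h; lra.
by split; rewrite !mulr_gt0 // ?invr_gt0.
Qed.

End M.

(* class 1 is [true] (short sentences, (0,r*]), class 2 is [false] ((r*,oo)) *)
Theorem proposition3p1 (R : realType) (beta gamma alphaI d rs : R)
  (q : probability R R) (x1 x2 : R) :
  0 < beta -> 0 < gamma -> 0 < alphaI -> alphaI <= 1 -> 0 <= d ->
  supported_on_pos q -> ac_plus_finite_atoms q -> finite_mean q ->
  0 < rs ->
  0 < pcl q rs true -> 0 < pcl q rs false ->
  0 < mu_in_cl q rs true d -> 0 < mu_in_cl q rs false d ->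
  0 <= x1 -> 0 <= x2 ->
  alphaI * pi_cl q rs true d * mu_in_cl q rs true d
    + beta * (x1 + x2) * (pi_cl q rs true d - x1)
    - (gamma + mu_in_cl q rs true d) * x1 = 0 ->
  alphaI * pi_cl q rs false d * mu_in_cl q rs false d
    + beta * (x1 + x2) * (pi_cl q rs false d - x2)
    - (gamma + mu_in_cl q rs false d) * x2 = 0 ->
  let xs := xstar alphaI beta gamma (mu_in q d) in
  let om := x1 + x2 in
  0 < xs /\ 0 < om /\
  (xs < om <-> alphaI < 1 - gamma / beta) /\
  (xs > om <-> alphaI > 1 - gamma / beta) /\
  (xs = om <-> alphaI = 1 - gamma / beta).
Proof.
move=> be0 ga0 al0 al1 d0 sup acf fm rs0 p10 p20 m10 m20 x10 x20 e1 e2.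
have [hp [hmu [hm [hpi1 hpi2]]]] :
  pi_cl q rs true d + pi_cl q rs false d = 1 /\
  mu_in q d = pi_cl q rs true d * mu_in_cl q rs true d
              + pi_cl q rs false d * mu_in_cl q rs false d /\
  mu_in_cl q rs true d != mu_in_cl q rs false d /\
  0 < pi_cl q rs true d /\ 0 < pi_cl q rs false d.
  case: (eqVneq d 0) => [dz|dn].
    by rewrite dz in m10 m20 *; exact: facts0.
  by apply: factsd => //; rewrite lt_neqAle eq_sym dn.
rewrite hmu.
exact: (@core R alphaI beta gamma _ _ _ _ x1 x2 be0 ga0 al0 al1 m10 m20 hpi1 hpi2 hp hm x10 x20 e1 e2).
Qed.
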